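(* Let $s_\varepsilon$ and $s$ be as defined below. Then $s_\varepsilon\to s$ as $\varepsilon\to0$, uniformly on compact subsets of $\mathbb{R}^4$.
   Context: Strict delta net: a net $(\delta_\varepsilon)_{\varepsilon\in(0,1]}$ of smooth compactly supported functions on $\mathbb{R}$ with $\operatorname{supp}\delta_\varepsilon\subseteq[-\varepsilon,\varepsilon]$, $\int\delta_\varepsilon\to1$ as $\varepsilon\to0$, and $\int|\delta_\varepsilon|\le C$ for some $C>0$ and small $\varepsilon$. Fix $f\in C^\infty(\mathbb{R}^2,\mathbb{R})$ and a strict delta net $(\delta_\varepsilon)_\varepsilon$; write $X=(X^1,X^2)$. Let $(x_\varepsilon)_\varepsilon=(x_\varepsilon^1,x_\varepsilon^2)_\varepsilon\in C^\infty(\mathbb{R}^2\times\mathbb{R},\mathbb{R}^2)^{(0,1]}$ be a fixed net such that for every compact $K\subseteq\mathbb{R}^2$ there is $\varepsilon_K$ such that for all $X\in K$ and $\varepsilon\le\varepsilon_K$, $U\mapsto x_\varepsilon(X,U)$ is the solution on all of $\mathbb{R}$ of $\partial_U^2x_\varepsilon^i(X,U)=\frac12\partial_if(x_\varepsilon(X,U))\,\delta_\varepsilon(U)$, $x_\varepsilon^i(X,-1)=X^i$, $\partial_Ux_\varepsilon^i(X,-1)=0$ ($i=1,2$). Write $\dot x_\varepsilon^i=\partial_U x_\varepsilon^i$ and define $$w_\varepsilon(X,V,U)=V+\int_{-\varepsilon}^U\int_{-\varepsilon}^s\sum_{i=1}^2\partial_if(x_\varepsilon(X,r))\,\dot x_\varepsilon^i(X,r)\,\delta_\varepsilon(r)\,dr\,ds,$$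 $s_\varepsilon(U,X^1,X^2,V)=(U,x_\varepsilon^1(X,U),x_\varepsilon^2(X,U),w_\varepsilon(X,V,U))$. With $U_+=\max(U,0)$, let $x^i(X,U)=X^i+\frac12\partial_if(X)U_+$, $w(X,V,U)=V+\frac14\sum_{i=1}^2(\partial_if(X))^2U_+$ and $s(U,X^1,X^2,V)=(U,x^1(X,U),x^2(X,U),w(X,V,U))$. *)

(* Defs.v *)
From Stdlib Require Import Reals Lra List ClassicalEpsilon.
Open Scope R_scope.

(** Total version of the (oriented) Riemann integral: equals [RiemannInt pr]
    whenever [f] is Riemann integrable between [a] and [b] (for any proof [pr];
    the value does not depend on [pr] by [RiemannInt_P5]). *)
Definition RInt (f : R -> R) (a b : R) : R :=
  epsilon (inhabits 0) (fun v => exists pr : Riemann_integrable f a b, RiemannInt pr = v).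

Definition dist2 (p q : R * R) : R :=
  Rmax (Rabs (fst p - fst q)) (Rabs (snd p - snd q)).
Definition dist4 (p q : R * R * R * R) : R :=
  let '(a1, a2, a3, a4) := p in let '(b1, b2, b3, b4) := q in
  Rmax (Rmax (Rabs (a1 - b1)) (Rabs (a2 - b2))) (Rmax (Rabs (a3 - b3)) (Rabs (a4 - b4))).

Definition is_open {T : Type} (d : T -> T -> R) (O : T -> Prop) : Prop :=
  forall p, O p -> exists r, 0 < r /\ forall q, d p q < r -> O q.

Definition is_compact {T : Type} (d : T -> T -> R) (K : T -> Prop) : Prop :=
  forall (I : Type) (O : I -> T -> Prop),
    (forall i, is_open d (O i)) ->
    (forall p, K p -> exists i, O i p) ->
    exists l : list I, forall p, K p -> exists i, In i l /\ O i p.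

Definition smooth1 (g : R -> R) : Prop :=
  exists D : nat -> R -> R, D 0%nat = g /\
    forall n x, derivable_pt_lim (D n) x (D (S n) x).

(* functions of two real variables; direction [true] = 1st variable, [false] = 2nd *)
Definition pd2 (F : R -> R -> R) (d : bool) (G : R -> R -> R) : Prop :=
  forall a b, if d then derivable_pt_lim (fun t => F t b) a (G a b)
              else derivable_pt_lim (fun t => F a t) b (G a b).
Definition cont2 (F : R -> R -> R) : Prop :=
  forall a b e, 0 < e -> exists r, 0 < r /\ forall a' b',
    Rabs (a' - a) < r -> Rabs (b' - b) < r -> Rabs (F a' b' - F a b) < e.
Definition smooth2 (F : R -> R -> R) : Prop :=
  exists D : list bool -> R -> R -> R, D nil = F /\
    (forall l, cont2 (D l)) /\ (forall l d, pd2 (D l) d (D (d :: l))).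

Inductive dir3 := Dir1 | Dir2 | Dir3.
Definition pd3 (F : R -> R -> R -> R) (d : dir3) (G : R -> R -> R -> R) : Prop :=
  forall a b c, match d with
    | Dir1 => derivable_pt_lim (fun t => F t b c) a (G a b c)
    | Dir2 => derivable_pt_lim (fun t => F a t c) b (G a b c)
    | Dir3 => derivable_pt_lim (fun t => F a b t) c (G a b c)
    end.
Definition cont3 (F : R -> R -> R -> R) : Prop :=
  forall a b c e, 0 < e -> exists r, 0 < r /\ forall a' b' c',
    Rabs (a' - a) < r -> Rabs (b' - b) < r -> Rabs (c' - c) < r ->
    Rabs (F a' b' c' - F a b c) < e.
Definition smooth3 (F : R -> R -> R -> R) : Prop :=
  exists D : list dir3 -> R -> R -> R -> R, D nil = F /\
    (forall l, cont3 (D l)) /\ (forall l d, pd3 (D l) d (D (d :: l))).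

Definition strict_delta_net (delta : R -> R -> R) : Prop :=
  (forall eps, 0 < eps <= 1 -> smooth1 (delta eps)) /\
  (forall eps, 0 < eps <= 1 -> forall u, eps < Rabs u -> delta eps u = 0) /\
  (forall eta, 0 < eta -> exists e0, 0 < e0 /\ forall eps, 0 < eps <= 1 -> eps <= e0 ->
      Rabs (RInt (delta eps) (- eps) eps - 1) < eta) /\
  (exists C e1, 0 < C /\ 0 < e1 /\ forall eps, 0 < eps <= 1 -> eps <= e1 ->
      RInt (fun u => Rabs (delta eps u)) (- eps) eps <= C).

Definition Upos (U : R) : R := Rmax U 0.

(** w_ε(X,V,U); df1, df2 = ∂_1 f, ∂_2 f; x1,x2 = x_ε; xd1,xd2 = ∂_U x_ε. *)
Definition w_eps (df1 df2 : R -> R -> R) (delta : R -> R -> R)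
  (x1 x2 xd1 xd2 : R -> R -> R -> R -> R) (eps X1 X2 V U : R) : R :=
  V + RInt (fun s => RInt (fun r =>
          (df1 (x1 eps X1 X2 r) (x2 eps X1 X2 r) * xd1 eps X1 X2 r
         + df2 (x1 eps X1 X2 r) (x2 eps X1 X2 r) * xd2 eps X1 X2 r) * delta eps r)
        (- eps) s) (- eps) U.

Definition s_eps (df1 df2 : R -> R -> R) (delta : R -> R -> R)
  (x1 x2 xd1 xd2 : R -> R -> R -> R -> R) (eps : R) (p : R * R * R * R)
  : R * R * R * R :=
  let '(U, X1, X2, V) := p in
  (U, x1 eps X1 X2 U, x2 eps X1 X2 U, w_eps df1 df2 delta x1 x2 xd1 xd2 eps X1 X2 V U).

Definition s_lim (df1 df2 : R -> R -> R) (p : R * R * R * R) : R * R * R * R :=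
  let '(U, X1, X2, V) := p in
  (U, X1 + / 2 * df1 X1 X2 * Upos U, X2 + / 2 * df2 X1 X2 * Upos U,
   V + / 4 * ((df1 X1 X2) ^ 2 + (df2 X1 X2) ^ 2) * Upos U).

(* Main.v *)
Require Import Defs.
From Stdlib Require Import Reals Lra List ClassicalEpsilon Classical FunctionalExtensionality ZArith Lia.
Open Scope R_scope.

Lemma cont_ed (f : R -> R) x : continuity_pt f x ->
  forall e, 0 < e -> exists d, 0 < d /\ forall y, Rabs (y - x) < d -> Rabs (f y - f x) < e.
Proof.
  intros H e He. destruct (H e He) as [d [Hd H1]]. exists d; split; auto.
  intros y Hy. destruct (Req_dec y x) as [->|Hne].
  - unfold Rminus; rewrite Rplus_opp_r, Rabs_R0; auto.
  - apply (H1 y). split. split. exact I. auto. exact Hy.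
Qed.

Lemma ed_cont (f : R -> R) x :
  (forall e, 0 < e -> exists d, 0 < d /\ forall y, Rabs (y - x) < d -> Rabs (f y - f x) < e) ->
  continuity_pt f x.
Proof.
  intros H e He. destruct (H e He) as [d [Hd H1]]. exists d; split; auto.
  intros y [_ Hy]. apply H1. exact Hy.
Qed.

Lemma dpl_cont f x l : derivable_pt_lim f x l -> continuity_pt f x.
Proof. intro H. apply derivable_continuous_pt. exists l. exact H. Qed.

Lemma cont_int (g : R -> R) : (forall x, continuity_pt g x) ->
  forall a b, Riemann_integrable g a b.
Proof.
  intros Hg a b. destruct (Rle_dec a b).
  - apply continuity_implies_RiemannInt; auto.
  - apply RiemannInt_P1. apply continuity_implies_RiemannInt; auto. lra.
Qed.

Lemma RInt_val g a b (pr : Riemann_integrable g a b) : RInt g a b = RiemannInt pr.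
Proof.
  unfold RInt.
  destruct (epsilon_spec (inhabits 0) (fun v => exists pr : Riemann_integrable g a b, RiemannInt pr = v))
    as [pr' Hpr'].
  - exists (RiemannInt pr), pr. reflexivity.
  - rewrite <- Hpr'. apply RiemannInt_P5.
Qed.

Lemma RInt_chasles g : (forall x, continuity_pt g x) ->
  forall a b c, RInt g a b + RInt g b c = RInt g a c.
Proof.
  intros Hg a b c.
  rewrite (RInt_val g a b (cont_int g Hg a b)), (RInt_val g b c (cont_int g Hg b c)),
    (RInt_val g a c (cont_int g Hg a c)).
  apply RiemannInt_P26.
Qed.

Lemma RInt_refl g : (forall x, continuity_pt g x) -> forall a, RInt g a a = 0.
Proof. intros Hg a. pose proof (RInt_chasles g Hg a a a). lra. Qed.

Lemma FTC_RInt g : (forall x, continuity_pt g x) ->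
  forall a x, derivable_pt_lim (fun t => RInt g a t) x (g x).
Proof.
  intros Hg a x.
  assert (h : x - 1 <= x + 1) by lra.
  assert (C0 : forall y, x - 1 <= y <= x + 1 -> continuity_pt g y) by auto.
  apply derivable_pt_lim_locally_ext with
    (f := fun t => RInt g a (x-1) + primitive h (FTC_P1 h C0) t) (a := x - 1) (b := x + 1).
  - lra.
  - intros z Hz. rewrite <- (RInt_chasles g Hg a (x-1) z). f_equal.
    unfold primitive. destruct (Rle_dec (x-1) z); [|lra]. destruct (Rle_dec z (x+1)); [|lra].
    symmetry; apply RInt_val.
  - replace (g x) with (0 + g x) by ring.
    apply (derivable_pt_lim_plus (fun _ => RInt g a (x-1)) (primitive h (FTC_P1 h C0))).
    + apply derivable_pt_lim_const.
    + apply RiemannInt_P28. lra.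
Qed.

Lemma Rabs_le_inv a b : Rabs a <= b -> - b <= a <= b.
Proof. intros H. pose proof (Rle_abs a). pose proof (Rle_abs (-a)). rewrite Rabs_Ropp in H1. lra. Qed.

Lemma CMP (g g' h h' : R -> R) a b : a <= b ->
  (forall c, a <= c <= b -> derivable_pt_lim g c (g' c) /\ derivable_pt_lim h c (h' c)
     /\ Rabs (g' c) <= h' c) ->
  Rabs (g b - g a) <= h b - h a.
Proof.
  intros Hab H. destruct Hab as [Hab|Heq].
  - destruct (MVT_cor2 (fun t => g t - h t) (fun t => g' t - h' t) a b Hab) as [c1 [E1 I1]].
    { intros c Hc. destruct (H c Hc) as [H1 [H2 _]].
      apply (derivable_pt_lim_minus g h); auto. }
    destruct (MVT_cor2 (fun t => g t + h t) (fun t => g' t + h' t) a b Hab) as [c2 [E2 I2]].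
    { intros c Hc. destruct (H c Hc) as [H1 [H2 _]].
      apply (derivable_pt_lim_plus g h); auto. }
    destruct (H c1 ltac:(lra)) as [_ [_ B1]]. destruct (H c2 ltac:(lra)) as [_ [_ B2]].
    apply Rabs_le_inv in B1; apply Rabs_le_inv in B2.
    assert ((g' c1 - h' c1) * (b - a) <= 0) by (replace ((g' c1 - h' c1) * (b - a)) with (- ((h' c1 - g' c1) * (b - a))) by ring; assert (0 <= (h' c1 - g' c1) * (b - a)) by (apply Rmult_le_pos; lra); lra).
    assert (0 <= (g' c2 + h' c2) * (b - a)) by (apply Rmult_le_pos; lra).
    apply Rabs_le; lra.
  - subst. unfold Rminus; rewrite Rplus_opp_r, Rabs_R0. lra.
Qed.

Lemma CONST (g : R -> R) a b :
  (forall c, Rmin a b <= c <= Rmax a b -> derivable_pt_lim g c 0) -> g a = g b.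
Proof.
  intros H. destruct (Rle_dec a b).
  - pose proof (CMP g (fun _ => 0) (fun _ => 0) (fun _ => 0) a b r) as C.
    assert (Rabs (g b - g a) <= 0 - 0).
    { apply C. intros c Hc. rewrite Rmin_left, Rmax_right in H by lra.
      split; [auto|split; [apply derivable_pt_lim_const|rewrite Rabs_R0; lra]]. }
    apply Rabs_le_inv in H0. lra.
  - pose proof (CMP g (fun _ => 0) (fun _ => 0) (fun _ => 0) b a ltac:(lra)) as C.
    assert (Rabs (g a - g b) <= 0 - 0).
    { apply C. intros c Hc. rewrite Rmin_right, Rmax_left in H by lra.
      split; [auto|split; [apply derivable_pt_lim_const|rewrite Rabs_R0; lra]]. }
    apply Rabs_le_inv in H0. lra.
Qed.

Lemma CI (phi : R -> R) a b c : a <= b -> (forall x, continuity_pt phi x) -> phi a < c ->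
  (forall t, a <= t <= b -> (forall r, a <= r <= t -> phi r <= c) -> phi t < c) ->
  forall t, a <= t <= b -> phi t < c.
Proof.
  intros Hab Hc Ha Hstep.
  set (E := fun s => a <= s <= b /\ forall r, a <= r <= s -> phi r < c).
  assert (Hb : bound E). { exists b. intros s [Hs _]. lra. }
  assert (Hne : exists s, E s). { exists a. split. lra. intros r Hr. replace r with a by lra. auto. }
  destruct (completeness E Hb Hne) as [m [Hub Hlub]].
  assert (Ham : a <= m). { apply Hub. destruct Hne. unfold E. split. lra. intros r Hr. replace r with a by lra. auto. }
  assert (Hmb : m <= b). { apply Hlub. intros s [Hs _]. lra. }
  assert (Hbelow : forall r, a <= r < m -> phi r < c).
  { intros r Hr. apply NNPP. intro Hn.
    assert (m <= r). { apply Hlub. intros s [Hs Hs2]. destruct (Rle_dec s r); auto.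
      exfalso. apply Hn. apply Hs2. lra. }
    lra. }
  assert (Hm : phi m <= c).
  { destruct (Rle_dec (phi m) c); auto. exfalso. apply Rnot_le_lt in n.
    destruct (Req_dec a m) as [<-|Hneq]. lra.
    destruct (cont_ed phi m (Hc m) (phi m - c) ltac:(lra)) as [d [Hd Hd2]].
    set (r := Rmax a (m - d/2)).
    assert (a <= r < m). { unfold r. split. apply Rmax_l. apply Rmax_lub_lt; lra. }
    assert (Rabs (r - m) < d). { rewrite Rabs_left by lra. 
      pose proof (Rmax_r a (m - d/2)). fold r in H0. lra. }
    pose proof (Hd2 r H0). pose proof (Hbelow r H).
    pose proof (Rle_abs (phi r - phi m)). rewrite Rabs_minus_sym in H1. 
    pose proof (Rle_abs (phi m - phi r)). lra. }
  assert (Hm2 : phi m < c).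
  { apply Hstep. lra. intros r Hr. destruct (Req_dec r m) as [->|]. auto. left; apply Hbelow; lra. }
  assert (Hmb2 : m = b).
  { destruct (Req_dec m b); auto. exfalso.
    destruct (cont_ed phi m (Hc m) (c - phi m) ltac:(lra)) as [d [Hd Hd2]].
    set (s := Rmin b (m + d/2)).
    assert (m < s). { unfold s. apply Rmin_glb_lt; lra. }
    assert (E s).
    { split. split. lra. apply Rmin_l. intros r Hr. destruct (Rlt_le_dec r m). apply Hbelow; lra.
      assert (Hrm : Rabs (r - m) < d). { rewrite Rabs_right by lra. pose proof (Rmin_r b (m + d/2)). fold s in H1. lra. }
      pose proof (Hd2 r Hrm). pose proof (Rle_abs (phi r - phi m)). lra. }
    pose proof (Hub s H1). lra. }
  intros t Ht. subst m. destruct (Req_dec t b) as [->|]; auto. apply Hbelow; lra.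
Qed.

Lemma Z_to_nat_neg z : (z < 0)%Z -> Z.to_nat z = 0%nat.
Proof. intros; destruct z; simpl; auto; lia. Qed.

Lemma list_min {A} (l : list A) (h : A -> R) : (forall x, In x l -> 0 < h x) ->
  exists m, 0 < m /\ forall x, In x l -> m <= h x.
Proof.
  induction l as [|y l IH]; intros H.
  - exists 1. split. lra. intros x [].
  - destruct IH as [m [Hm Hm2]]. intros; apply H; right; auto.
    exists (Rmin m (h y)). split. apply Rmin_pos; auto. apply H; left; auto.
    intros x [<-|Hx]. apply Rmin_r. eapply Rle_trans. apply Rmin_l. auto.
Qed.

Lemma list_max {A} (l : list A) (h : A -> R) : exists M, forall x, In x l -> h x <= M.
Proof.
  induction l as [|y l IH].
  - exists 0. intros x [].
  - destruct IH as [M HM]. exists (Rmax M (h y)).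
    intros x [<-|Hx]. apply Rmax_r. eapply Rle_trans. apply HM; auto. apply Rmax_l.
Qed.

Lemma compact_bound {T} (d : T -> T -> R) (K : T -> Prop) (g : T -> R) :
  is_compact d K ->
  (forall p e, 0 < e -> exists r, 0 < r /\ forall q, d p q < r -> g q < g p + e) ->
  exists M, forall p, K p -> g p <= M.
Proof.
  intros HK Hg.
  destruct (HK nat (fun n q => g q < INR n)) as [l Hl].
  - intros n p Hp. destruct (Hg p (INR n - g p) ltac:(lra)) as [r [Hr Hr2]].
    exists r. split; auto. intros q Hq. pose proof (Hr2 q Hq). lra.
  - intros p _. destruct (archimed (g p)) as [H1 _].
    exists (Z.to_nat (up (g p))). 
    destruct (Z.lt_ge_cases (up (g p)) 0) as [Hz|Hz].
    + rewrite (Z_to_nat_neg (up (g p)) Hz). simpl.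
      assert (IZR (up (g p)) <= -1). { apply IZR_le. lia. } lra.
    + rewrite INR_IZR_INZ, Z2Nat.id by lia. auto.
  - destruct (list_max l INR) as [M HM]. exists M. intros p Hp.
    destruct (Hl p Hp) as [i [Hi Hi2]]. pose proof (HM i Hi). lra.
Qed.

Lemma Rabs_tri a b c : Rabs (a - c) <= Rabs (a - b) + Rabs (b - c).
Proof. replace (a - c) with ((a - b) + (b - c)) by ring. apply Rabs_triang. Qed.

Lemma dist2_tri p q r : dist2 p r <= dist2 p q + dist2 q r.
Proof.
  destruct p as [p1 p2], q as [q1 q2], r as [r1 r2]; unfold dist2; simpl.
  pose proof (Rabs_tri p1 q1 r1). pose proof (Rabs_tri p2 q2 r2).
  pose proof (Rmax_l (Rabs (p1 - q1)) (Rabs (p2 - q2))).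
  pose proof (Rmax_r (Rabs (p1 - q1)) (Rabs (p2 - q2))).
  pose proof (Rmax_l (Rabs (q1 - r1)) (Rabs (q2 - r2))).
  pose proof (Rmax_r (Rabs (q1 - r1)) (Rabs (q2 - r2))).
  apply Rmax_lub; lra.
Qed.

Lemma dist2_sym p q : dist2 p q = dist2 q p.
Proof. destruct p, q; unfold dist2; simpl. rewrite (Rabs_minus_sym r), (Rabs_minus_sym r0). auto. Qed.

Lemma dist2_lt p1 p2 q1 q2 r : dist2 (p1, p2) (q1, q2) < r -> Rabs (q1 - p1) < r /\ Rabs (q2 - p2) < r.
Proof.
  unfold dist2; simpl. intros H. rewrite (Rabs_minus_sym q1), (Rabs_minus_sym q2).
  pose proof (Rmax_l (Rabs (p1 - q1)) (Rabs (p2 - q2))).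
  pose proof (Rmax_r (Rabs (p1 - q1)) (Rabs (p2 - q2))). lra.
Qed.

Lemma compact_uc (K : R * R -> Prop) (g : R -> R -> R) :
  is_compact dist2 K -> cont2 g ->
  forall eta, 0 < eta -> exists rho, 0 < rho /\
    forall X Y, K X -> dist2 X Y < rho -> Rabs (g (fst Y) (snd Y) - g (fst X) (snd X)) < eta.
Proof.
  intros HK Hg eta Heta.
  set (O := fun (pr : (R * R) * R) q => let (p, r) := pr in 0 < r /\
     (forall z, dist2 p z < 2 * r -> Rabs (g (fst z) (snd z) - g (fst p) (snd p)) < eta / 2) /\
     dist2 p q < r).
  destruct (HK _ O) as [l Hl].
  - intros [p r] q [Hr [Hz Hq]]. exists (r - dist2 p q). split. lra.
    intros q' Hq'. split; auto. split; auto. pose proof (dist2_tri p q q'). lra.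
  - intros [p1 p2] _. destruct (Hg p1 p2 (eta/2) ltac:(lra)) as [r [Hr Hr2]].
    exists ((p1, p2), r/2). split. lra. split.
    + intros [z1 z2] Hz. simpl. replace (2 * (r/2)) with r in Hz by field.
      destruct (dist2_lt _ _ _ _ _ Hz). apply Hr2; auto.
    + unfold dist2; simpl. unfold Rminus; rewrite !Rplus_opp_r, Rabs_R0, Rmax_left; lra.
  - destruct (list_min l (fun x => if Rlt_dec 0 (snd x) then snd x else 1)) as [m [Hm Hm2]].
    { intros [p r] Hin. simpl. destruct (Rlt_dec 0 r); lra. }
    exists m. split; auto. intros X Y HX HXY.
    destruct (Hl X HX) as [[p r] [Hin [Hr [Hz Hq]]]].
    pose proof (Hm2 _ Hin). simpl in H. destruct (Rlt_dec 0 r); [|lra].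
    pose proof (Hz X ltac:(lra)). pose proof (dist2_tri p X Y).
    pose proof (Hz Y ltac:(lra)).
    pose proof (Rabs_tri (g (fst Y) (snd Y)) (g (fst p) (snd p)) (g (fst X) (snd X))) as T.
    rewrite (Rabs_minus_sym (g (fst p) (snd p))) in T. lra.
Qed.

Lemma dist4_le p1 p2 p3 p4 q1 q2 q3 q4 :
  Rabs (p1 - q1) <= dist4 (p1,p2,p3,p4) (q1,q2,q3,q4) /\
  Rabs (p2 - q2) <= dist4 (p1,p2,p3,p4) (q1,q2,q3,q4) /\
  Rabs (p3 - q3) <= dist4 (p1,p2,p3,p4) (q1,q2,q3,q4) /\
  Rabs (p4 - q4) <= dist4 (p1,p2,p3,p4) (q1,q2,q3,q4).
Proof.
  unfold dist4.
  pose proof (Rmax_l (Rabs (p1 - q1)) (Rabs (p2 - q2))).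
  pose proof (Rmax_r (Rabs (p1 - q1)) (Rabs (p2 - q2))).
  pose proof (Rmax_l (Rabs (p3 - q3)) (Rabs (p4 - q4))).
  pose proof (Rmax_r (Rabs (p3 - q3)) (Rabs (p4 - q4))).
  pose proof (Rmax_l (Rmax (Rabs (p1 - q1)) (Rabs (p2 - q2))) (Rmax (Rabs (p3 - q3)) (Rabs (p4 - q4)))).
  pose proof (Rmax_r (Rmax (Rabs (p1 - q1)) (Rabs (p2 - q2))) (Rmax (Rabs (p3 - q3)) (Rabs (p4 - q4)))).
  repeat split; lra.
Qed.

Lemma dist4_lt p1 p2 p3 p4 q1 q2 q3 q4 e :
  Rabs (p1 - q1) < e -> Rabs (p2 - q2) < e -> Rabs (p3 - q3) < e -> Rabs (p4 - q4) < e ->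
  dist4 (p1,p2,p3,p4) (q1,q2,q3,q4) < e.
Proof. intros. unfold dist4. repeat apply Rmax_lub_lt; auto. Qed.

Lemma K2_compact (K : R * R * R * R -> Prop) : is_compact dist4 K ->
  is_compact dist2 (fun Y => exists U V, K (U, fst Y, snd Y, V)).
Proof.
  intros HK I O HO Hcov.
  destruct (HK I (fun i p => match p with (U, X1, X2, V) => O i (X1, X2) end)) as [l Hl].
  - intros i [[[U X1] X2] V] Hp. destruct (HO i _ Hp) as [r [Hr Hr2]].
    exists r. split; auto. intros [[[U' X1'] X2'] V'] Hq. apply Hr2.
    destruct (dist4_le U X1 X2 V U' X1' X2' V') as [_ [A2 [A3 _]]].
    unfold dist2; simpl. apply Rmax_lub_lt; lra.
  - intros [[[U X1] X2] V] Hp. destruct (Hcov (X1, X2)) as [i Hi].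
    exists U, V. exact Hp. exists i. exact Hi.
  - exists l. intros [Y1 Y2] [U [V Hp]]. destruct (Hl _ Hp) as [i [Hin Hi]]. exists i. auto.
Qed.

Lemma U_bound (K : R * R * R * R -> Prop) : is_compact dist4 K ->
  exists R0, forall U X1 X2 V, K (U, X1, X2, V) -> Rabs U <= R0.
Proof.
  intros HK.
  destruct (compact_bound dist4 K (fun p => match p with (U, _, _, _) => Rabs U end) HK) as [M HM].
  - intros [[[U X1] X2] V] e He. exists e. split; auto.
    intros [[[U' X1'] X2'] V'] Hq. destruct (dist4_le U X1 X2 V U' X1' X2' V') as [A1 _].
    pose proof (Rabs_tri U' U 0). rewrite Rabs_minus_sym in A1. rewrite !Rminus_0_r in H. lra.
  - exists M. intros U X1 X2 V H. exact (HM _ H).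
Qed.

Lemma g_bound (K : R * R -> Prop) (g : R -> R -> R) : is_compact dist2 K -> cont2 g ->
  exists M, 0 < M /\ forall X1 X2, K (X1, X2) -> Rabs (g X1 X2) <= M.
Proof.
  intros HK Hg.
  destruct (compact_bound dist2 K (fun p => Rabs (g (fst p) (snd p))) HK) as [M HM].
  - intros [p1 p2] e He. destruct (Hg p1 p2 e He) as [r [Hr Hr2]]. exists r. split; auto.
    intros [q1 q2] Hq. destruct (dist2_lt _ _ _ _ _ Hq). simpl.
    pose proof (Hr2 q1 q2 H H0). pose proof (Rabs_tri (g q1 q2) (g p1 p2) 0).
    rewrite !Rminus_0_r in H2. lra.
  - exists (Rmax M 1). split. pose proof (Rmax_r M 1). lra.
    intros X1 X2 H. pose proof (HM _ H). simpl in H0. pose proof (Rmax_l M 1). lra.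
Qed.

Lemma dl_eq f x l l' : derivable_pt_lim f x l -> l = l' -> derivable_pt_lim f x l'.
Proof. intros H ->; auto. Qed.

Lemma dl_plus f g x l1 l2 : derivable_pt_lim f x l1 -> derivable_pt_lim g x l2 ->
  derivable_pt_lim (fun s => f s + g s) x (l1 + l2).
Proof. intros; apply (derivable_pt_lim_plus f g); auto. Qed.

Lemma dl_minus f g x l1 l2 : derivable_pt_lim f x l1 -> derivable_pt_lim g x l2 ->
  derivable_pt_lim (fun s => f s - g s) x (l1 - l2).
Proof. intros; apply (derivable_pt_lim_minus f g); auto. Qed.

Lemma dl_mult f g x l1 l2 : derivable_pt_lim f x l1 -> derivable_pt_lim g x l2 ->
  derivable_pt_lim (fun s => f s * g s) x (l1 * g x + f x * l2).
Proof. intros; apply (derivable_pt_lim_mult f g); auto. Qed.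

Lemma dl_const k x : derivable_pt_lim (fun _ => k) x 0.
Proof. apply derivable_pt_lim_const. Qed.

Lemma dl_id x : derivable_pt_lim (fun s => s) x 1.
Proof. apply derivable_pt_lim_id. Qed.

Lemma dl_scal k f x l : derivable_pt_lim f x l -> derivable_pt_lim (fun s => k * f s) x (k * l).
Proof. intros H. apply (dl_eq _ _ (0 * f x + k * l)). apply dl_mult; auto. apply dl_const. ring. Qed.

Lemma dl_sq f x l : derivable_pt_lim f x l -> derivable_pt_lim (fun s => f s ^ 2) x (2 * f x * l).
Proof.
  intros H. apply (dl_eq _ _ (l * f x + f x * l)).
  apply (derivable_pt_lim_ext (fun s => f s * f s)). intros; ring. apply dl_mult; auto. ring.
Qed.

Lemma cont_plus f g x : continuity_pt f x -> continuity_pt g x -> continuity_pt (fun s => f s + g s) x.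
Proof. intros; apply (continuity_pt_plus f g); auto. Qed.

Lemma cont_mult f g x : continuity_pt f x -> continuity_pt g x -> continuity_pt (fun s => f s * g s) x.
Proof. intros; apply (continuity_pt_mult f g); auto. Qed.

Lemma cont_sq f x : continuity_pt f x -> continuity_pt (fun s => f s ^ 2) x.
Proof.
  intros H. apply (continuity_pt_locally_ext (fun s => f s * f s)) with (a := 1). lra.
  intros; ring. apply cont_mult; auto.
Qed.

Lemma cont_abs f x : continuity_pt f x -> continuity_pt (fun s => Rabs (f s)) x.
Proof. intros H. apply (continuity_pt_comp f Rabs); auto. apply Rcontinuity_abs. Qed.

Lemma cont_comp2 (g : R -> R -> R) u v x : cont2 g -> continuity_pt u x -> continuity_pt v x ->
  continuity_pt (fun s => g (u s) (v s)) x.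
Proof.
  intros Hg Hu Hv. apply ed_cont. intros e He.
  destruct (Hg (u x) (v x) e He) as [r [Hr Hr2]].
  destruct (cont_ed u x Hu r Hr) as [d1 [Hd1 H1]].
  destruct (cont_ed v x Hv r Hr) as [d2 [Hd2 H2]].
  exists (Rmin d1 d2). split. apply Rmin_pos; auto. intros y Hy.
  pose proof (Rmin_l d1 d2). pose proof (Rmin_r d1 d2).
  apply Hr2; [apply H1|apply H2]; lra.
Qed.

Lemma cont2_pd (F G1 : R -> R -> R) d : smooth2 F -> pd2 F d G1 -> cont2 G1.
Proof.
  intros [D [HD0 [HDc HDd]]] Hp.
  assert (E : forall a b, G1 a b = D (d :: nil) a b).
  { intros a b. pose proof (HDd nil d a b) as H1. pose proof (Hp a b) as H2. rewrite HD0 in H1.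
    destruct d; eapply uniqueness_limite; eauto. }
  intros a b e He. destruct (HDc (d :: nil) a b e He) as [r [Hr Hr2]]. exists r; split; auto.
  intros. rewrite !E. auto.
Qed.

Lemma smooth1_cont g : smooth1 g -> forall x, continuity_pt g x.
Proof. intros [D [HD0 HD]] x. rewrite <- HD0. eapply dpl_cont. apply HD. Qed.

Lemma zero_edge (g : R -> R) eps : 0 < eps -> (forall x, continuity_pt g x) ->
  (forall u, eps < Rabs u -> g u = 0) -> forall u, eps <= Rabs u -> g u = 0.
Proof.
  intros He Hc Hz u Hu. destruct Hu as [Hu|Hu]. auto.
  apply NNPP. intro Hn. assert (Hp : 0 < Rabs (g u)) by (apply Rabs_pos_lt; auto).
  destruct (cont_ed g u (Hc u) _ Hp) as [d [Hd Hd2]].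
  set (u' := if Rle_dec 0 u then u + d/2 else u - d/2).
  assert (Rabs (u' - u) < d /\ eps < Rabs u').
  { unfold u'. destruct (Rle_dec 0 u).
    - rewrite Rabs_right in Hu by lra. replace (u + d/2 - u) with (d/2) by ring.
      rewrite !Rabs_right by lra. lra.
    - rewrite Rabs_left in Hu by lra. replace (u - d/2 - u) with (-(d/2)) by ring.
      rewrite Rabs_Ropp, Rabs_right, Rabs_left by lra. lra. }
  destruct H. pose proof (Hd2 u' H). rewrite (Hz u' H0) in H1.
  rewrite Rminus_0_l, Rabs_Ropp in H1. lra.
Qed.

Lemma Rabs_le_intro a b : - b <= a <= b -> Rabs a <= b.
Proof. intros; apply Rabs_le; auto. Qed.

Lemma Hfacts (dl : R -> R) eps : 0 < eps -> (forall u, continuity_pt dl u) ->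
  let H := fun r => RInt (fun u => Rabs (dl u)) (-eps) r in
  (forall r, derivable_pt_lim H r (Rabs (dl r))) /\ H (-eps) = 0 /\
  (forall r, -eps <= r <= eps -> 0 <= H r <= H eps).
Proof.
  intros He Hc H.
  assert (Hca : forall u, continuity_pt (fun u => Rabs (dl u)) u) by (intros; apply cont_abs; auto).
  assert (HD : forall r, derivable_pt_lim H r (Rabs (dl r))) by (intros r; exact (FTC_RInt (fun u => Rabs (dl u)) Hca (-eps) r)).
  assert (H0 : H (-eps) = 0) by (apply RInt_refl; auto).
  split; auto. split; auto. intros r Hr. split.
  - pose proof (CMP (fun _ => 0) (fun _ => 0) H (fun u => Rabs (dl u)) (-eps) r ltac:(lra)) as T.
    assert (Rabs (0 - 0) <= H r - H (-eps)). apply T. intros; repeat split; auto. apply dl_const.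
      rewrite Rabs_R0; apply Rabs_pos. pose proof (Rabs_pos (0 - 0)). lra.
  - pose proof (CMP (fun _ => 0) (fun _ => 0) H (fun u => Rabs (dl u)) r eps ltac:(lra)) as T.
    assert (Rabs (0 - 0) <= H eps - H r). apply T. intros; repeat split; auto. apply dl_const.
      rewrite Rabs_R0; apply Rabs_pos. pose proof (Rabs_pos (0 - 0)). lra.
Qed.

Lemma vbound (dl v k : R -> R) eps M C t : 0 < eps -> (forall u, continuity_pt dl u) ->
  RInt (fun u => Rabs (dl u)) (-eps) eps <= C -> 0 <= M ->
  (forall c, derivable_pt_lim v c (/2 * k c * dl c)) -> v (-eps) = 0 -> t <= eps ->
  (forall c, -eps <= c <= t -> Rabs (k c) <= M) ->
  forall r, -eps <= r <= t -> Rabs (v r) <= /2 * M * C.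
Proof.
  intros He Hc HC HM Hv Hv0 Ht Hk r Hr.
  destruct (Hfacts dl eps He Hc) as [HD [H0 Hb]].
  set (H := fun r => RInt (fun u => Rabs (dl u)) (-eps) r) in *.
  pose proof (CMP v (fun c => /2 * k c * dl c) (fun s => /2 * M * H s) (fun s => /2 * M * Rabs (dl s))
     (-eps) r ltac:(lra)) as T.
  assert (Rabs (v r - v (-eps)) <= /2 * M * H r - /2 * M * H (-eps)).
  { apply T. intros c Hc'. split; auto. split. apply dl_scal; auto.
    rewrite !Rabs_mult, Rabs_right by lra. pose proof (Hk c ltac:(lra)).
    pose proof (Rabs_pos (dl c)). apply Rmult_le_compat_r; auto. lra. }
  rewrite Hv0, H0, Rminus_0_r in H1. pose proof (Hb r ltac:(lra)).
  assert (/2 * M * H r <= /2 * M * C).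
  { apply Rmult_le_compat_l. lra. unfold H in *. lra. }
  lra.
Qed.

Lemma xbound (x v : R -> R) a t B : a <= t -> (forall c, derivable_pt_lim x c (v c)) ->
  (forall c, a <= c <= t -> Rabs (v c) <= B) -> Rabs (x t - x a) <= B * (t - a).
Proof.
  intros Ha Hx Hv. pose proof (CMP x v (fun s => B * s) (fun _ => B) a t Ha) as T.
  replace (B * (t - a)) with (B * t - B * a) by ring. apply T.
  intros c Hc. split; auto. split; auto. apply (dl_eq _ _ (B * 1)). apply dl_scal, dl_id. ring.
Qed.

Lemma left_const (g : R -> R) eps : eps <= 1 ->
  (forall c, c <= -eps -> derivable_pt_lim g c 0) -> forall r, r <= -eps -> g r = g (-1).
Proof.
  intros He Hg r Hr. apply CONST. intros c Hc.
  pose proof (Rmax_lub r (-1) (-eps) Hr ltac:(lra)). apply Hg. lra.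
Qed.

Lemma right_const (g : R -> R) eps :
  (forall c, eps <= c -> derivable_pt_lim g c 0) -> forall r, eps <= r -> g r = g eps.
Proof.
  intros Hg r Hr. apply CONST. intros c Hc.
  pose proof (Rmin_glb r eps eps Hr ltac:(lra)). apply Hg. lra.
Qed.

Lemma F4 (dl v k : R -> R) eps C theta k0 eta : 0 < eps -> (forall u, continuity_pt dl u) ->
  RInt (fun u => Rabs (dl u)) (-eps) eps <= C -> Rabs (RInt dl (-eps) eps - 1) <= theta -> 0 <= eta ->
  (forall c, derivable_pt_lim v c (/2 * k c * dl c)) -> v (-eps) = 0 ->
  (forall c, -eps <= c <= eps -> Rabs (k c - k0) <= eta) ->
  Rabs (v eps - /2 * k0) <= /2 * eta * C + Rabs (/2 * k0) * theta.
Proof.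
  intros He Hc HC Hth Heta Hv Hv0 Hk.
  destruct (Hfacts dl eps He Hc) as [HD [H0 Hb]].
  set (H := fun r => RInt (fun u => Rabs (dl u)) (-eps) r) in *.
  set (Dl := fun r => RInt dl (-eps) r).
  assert (HDl : forall r, derivable_pt_lim Dl r (dl r)) by (intros; apply FTC_RInt; auto).
  assert (HDl0 : Dl (-eps) = 0) by (apply RInt_refl; auto).
  pose proof (CMP (fun s => v s - /2 * k0 * Dl s) (fun c => /2 * k c * dl c - /2 * k0 * dl c)
    (fun s => /2 * eta * H s) (fun s => /2 * eta * Rabs (dl s)) (-eps) eps ltac:(lra)) as T.
  assert (Rabs ((v eps - /2 * k0 * Dl eps) - (v (-eps) - /2 * k0 * Dl (-eps)))
           <= /2 * eta * H eps - /2 * eta * H (-eps)).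
  { apply T. intros c Hc'. split. apply dl_minus; auto. apply dl_scal; auto.
    split. apply dl_scal; auto.
    replace (/2 * k c * dl c - /2 * k0 * dl c) with (/2 * (k c - k0) * dl c) by ring.
    rewrite !Rabs_mult, Rabs_right by lra. pose proof (Hk c Hc').
    pose proof (Rabs_pos (dl c)). apply Rmult_le_compat_r; auto. lra. }
  rewrite Hv0, HDl0, H0 in H1.
  assert (/2 * eta * H eps <= /2 * eta * C) by (apply Rmult_le_compat_l; lra).
  replace (v eps - /2 * k0) with ((v eps - /2 * k0 * Dl eps - (0 - /2 * k0 * 0)) + /2 * k0 * (Dl eps - 1)) by ring.
  eapply Rle_trans. apply Rabs_triang. rewrite Rabs_mult.
  assert (Rabs (/2 * k0) * Rabs (Dl eps - 1) <= Rabs (/2 * k0) * theta).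
  { apply Rmult_le_compat_l. apply Rabs_pos. exact Hth. }
  lra.
Qed.

Lemma Upos_cases U eps : 0 < eps ->
  (U <= -eps /\ Upos U = 0) \/ (-eps <= U <= eps /\ 0 <= Upos U <= eps) \/ (eps <= U /\ Upos U = U).
Proof.
  intros He. unfold Upos. destruct (Rle_dec U (-eps)).
  - left. split; auto. apply Rmax_right. lra.
  - destruct (Rle_dec U eps).
    + right; left. split. lra. destruct (Rle_dec U 0).
      rewrite Rmax_right; lra. rewrite Rmax_left; lra.
    + right; right. split. lra. apply Rmax_left. lra.
Qed.

Lemma xerr (x : R -> R) X d eps B a da R0 U v0 E :
  0 < eps -> 0 <= B -> 0 <= a -> 0 <= da -> 0 <= R0 -> Rabs U <= R0 ->
  (forall r, r <= -eps -> x r = X) ->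
  (forall r, -eps <= r <= eps -> Rabs (x r - X) <= 2 * B * eps) ->
  (forall r, eps <= r -> x r = x eps + v0 * (r - eps)) ->
  Rabs v0 <= B -> Rabs (v0 - /2 * d) <= da -> Rabs (/2 * d) <= a ->
  E = (3 * B + a + 6 * B^2 + 2 * a^2) * eps + R0 * da * (1 + 2 * (B + a)) ->
  Rabs (x U - (X + /2 * d * Upos U)) <= E.
Proof.
  intros He HB Ha Hda HR0 HU Hl Hm Hr Hv0 Hvd Hd HE.
  assert (P1 : 0 <= B^2 * eps) by (apply Rmult_le_pos; [apply pow2_ge_0|lra]).
  assert (P2 : 0 <= a^2 * eps) by (apply Rmult_le_pos; [apply pow2_ge_0|lra]).
  assert (P3 : 0 <= R0 * da * (1 + 2 * (B + a))) by (apply Rmult_le_pos; [apply Rmult_le_pos|]; lra).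
  assert (P4 : 0 <= B * eps) by (apply Rmult_le_pos; lra).
  assert (P5 : 0 <= a * eps) by (apply Rmult_le_pos; lra).
  assert (P6 : R0 * da <= R0 * da * (1 + 2 * (B + a))).
  { assert (0 <= R0 * da * (2 * (B + a))) by (apply Rmult_le_pos; [apply Rmult_le_pos|]; lra). nra. }
  destruct (Upos_cases U eps He) as [[HU1 HP]|[[HU1 HP]|[HU1 HP]]].
  - rewrite HP, Hl by auto. replace (X - (X + /2 * d * 0)) with 0 by ring. rewrite Rabs_R0. subst E; lra.
  - replace (x U - (X + /2 * d * Upos U)) with ((x U - X) - (/2 * d) * Upos U) by ring.
    eapply Rle_trans. apply Rabs_triang. rewrite Rabs_Ropp, Rabs_mult, (Rabs_right (Upos U)) by lra.
    pose proof (Hm U HU1).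
    assert (Rabs (/2 * d) * Upos U <= a * eps) by (apply Rmult_le_compat; try lra; apply Rabs_pos).
    subst E; lra.
  - rewrite HP, Hr by auto.
    replace (x eps + v0 * (U - eps) - (X + / 2 * d * U)) with ((x eps - X) + (v0 - /2 * d) * U - v0 * eps) by ring.
    eapply Rle_trans. apply Rabs_triang. eapply Rle_trans. apply Rplus_le_compat_r. apply Rabs_triang.
    rewrite Rabs_Ropp, !Rabs_mult, (Rabs_right eps) by lra.
    pose proof (Hm eps ltac:(lra)).
    assert (Rabs (v0 - /2 * d) * Rabs U <= da * R0) by (apply Rmult_le_compat; try lra; apply Rabs_pos).
    assert (Rabs v0 * eps <= B * eps) by (apply Rmult_le_compat_r; lra).
    subst E; lra.
Qed.

Lemma sq_le x b : Rabs x <= b -> x ^ 2 <= b ^ 2.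
Proof. intros H. apply Rabs_le_inv in H. nra. Qed.

Lemma Gerr (G w : R -> R) eps B a da R0 U a1 a2 d1 d2 E :
  0 < eps -> 0 <= B -> 0 <= a -> 0 <= da -> 0 <= R0 -> Rabs U <= R0 ->
  (forall s, derivable_pt_lim G s (w s)) -> G (-eps) = 0 ->
  (forall s, s <= -eps -> w s = 0) ->
  (forall s, -eps <= s <= eps -> Rabs (w s) <= 2 * B ^ 2) ->
  (forall s, eps <= s -> w s = a1 ^ 2 + a2 ^ 2) ->
  Rabs a1 <= B -> Rabs a2 <= B -> Rabs (a1 - /2 * d1) <= da -> Rabs (a2 - /2 * d2) <= da ->
  Rabs (/2 * d1) <= a -> Rabs (/2 * d2) <= a ->
  E = (3 * B + a + 6 * B^2 + 2 * a^2) * eps + R0 * da * (1 + 2 * (B + a)) ->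
  Rabs (G U - /4 * (d1 ^ 2 + d2 ^ 2) * Upos U) <= E.
Proof.
  intros He HB Ha Hda HR0 HU HG HG0 Hwl Hwm Hwr Ha1 Ha2 Hd1 Hd2 HA1 HA2 HE.
  assert (P1 : 0 <= B^2 * eps) by (apply Rmult_le_pos; [apply pow2_ge_0|lra]).
  assert (P2 : 0 <= a^2 * eps) by (apply Rmult_le_pos; [apply pow2_ge_0|lra]).
  assert (P4 : 0 <= B * eps) by (apply Rmult_le_pos; lra).
  assert (P5 : 0 <= a * eps) by (apply Rmult_le_pos; lra).
  assert (Hc : /4 * (d1 ^ 2 + d2 ^ 2) = (/2 * d1) ^ 2 + (/2 * d2) ^ 2) by field.
  assert (GM : forall r, -eps <= r <= eps -> Rabs (G r) <= 4 * B ^ 2 * eps).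
  { intros r Hr. pose proof (CMP G w (fun s => 2 * B ^ 2 * s) (fun _ => 2 * B ^ 2) (-eps) r ltac:(lra)) as T.
    assert (Rabs (G r - G (-eps)) <= 2 * B ^ 2 * r - 2 * B ^ 2 * (-eps)).
    { apply T. intros c Hc'. split; auto. split. apply (dl_eq _ _ (2 * B ^ 2 * 1)). apply dl_scal, dl_id. ring.
      apply Hwm. lra. }
    rewrite HG0, Rminus_0_r in H. assert (2 * B ^ 2 * r <= 2 * B ^ 2 * eps).
    { apply Rmult_le_compat_l. pose proof (pow2_ge_0 B). lra. lra. } lra. }
  assert (HAs1 := sq_le _ _ HA1). assert (HAs2 := sq_le _ _ HA2).
  assert (Has1 := sq_le _ _ Ha1). assert (Has2 := sq_le _ _ Ha2).
  destruct (Upos_cases U eps He) as [[HU1 HP]|[[HU1 HP]|[HU1 HP]]].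
  - rewrite HP. assert (G U = G (-eps)).
    { apply CONST. intros c Hc'. pose proof (Rmax_lub U (-eps) (-eps) HU1 ltac:(lra)).
      eapply dl_eq. apply HG. apply Hwl. lra. }
    rewrite H, HG0. replace (0 - / 4 * (d1 ^ 2 + d2 ^ 2) * 0) with 0 by ring. rewrite Rabs_R0.
    assert (0 <= R0 * da * (1 + 2 * (B + a))) by (apply Rmult_le_pos; [apply Rmult_le_pos|]; lra).
    subst E; lra.
  - rewrite Hc. eapply Rle_trans. apply Rabs_triang. rewrite Rabs_Ropp, Rabs_mult, (Rabs_right (Upos U)) by lra.
    pose proof (GM U HU1).
    assert (Rabs ((/2 * d1) ^ 2 + (/2 * d2) ^ 2) * Upos U <= (2 * a^2) * eps).
    { apply Rmult_le_compat; try lra. apply Rabs_pos. rewrite Rabs_right.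
      lra. pose proof (pow2_ge_0 (/2*d1)). pose proof (pow2_ge_0 (/2*d2)). lra. }
    assert (0 <= R0 * da * (1 + 2 * (B + a))) by (apply Rmult_le_pos; [apply Rmult_le_pos|]; lra).
    subst E; lra.
  - rewrite HP, Hc.
    assert (GR : G U = G eps + (a1 ^ 2 + a2 ^ 2) * (U - eps)).
    { assert (G U - (a1 ^ 2 + a2 ^ 2) * U = G eps - (a1 ^ 2 + a2 ^ 2) * eps).
      { apply (right_const (fun s => G s - (a1 ^ 2 + a2 ^ 2) * s)); auto. intros c Hc'.
        apply (dl_eq _ _ (w c - (a1 ^ 2 + a2 ^ 2) * 1)). apply dl_minus. apply HG. apply dl_scal, dl_id.
        rewrite Hwr by auto. ring. }
      lra. }
    rewrite GR.
    set (A1 := /2 * d1) in *. set (A2 := /2 * d2) in *.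
    replace (G eps + (a1 ^ 2 + a2 ^ 2) * (U - eps) - (A1 ^ 2 + A2 ^ 2) * U)
      with (G eps - (a1 ^ 2 + a2 ^ 2) * eps + ((a1 - A1) * (a1 + A1) + (a2 - A2) * (a2 + A2)) * U) by ring.
    pose proof (GM eps ltac:(lra)).
    assert (Q1 : Rabs ((a1 - A1) * (a1 + A1)) <= da * (B + a)).
    { rewrite Rabs_mult. apply Rmult_le_compat; try apply Rabs_pos; auto.
      eapply Rle_trans. apply Rabs_triang. lra. }
    assert (Q2 : Rabs ((a2 - A2) * (a2 + A2)) <= da * (B + a)).
    { rewrite Rabs_mult. apply Rmult_le_compat; try apply Rabs_pos; auto.
      eapply Rle_trans. apply Rabs_triang. lra. }
    assert (Q3 : Rabs (((a1 - A1) * (a1 + A1) + (a2 - A2) * (a2 + A2)) * U) <= 2 * (da * (B + a)) * R0).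
    { rewrite Rabs_mult. apply Rmult_le_compat; try apply Rabs_pos; auto.
      eapply Rle_trans. apply Rabs_triang. lra. }
    assert (Q4 : Rabs (G eps - (a1 ^ 2 + a2 ^ 2) * eps) <= 4 * B ^ 2 * eps + 2 * B ^ 2 * eps).
    { eapply Rle_trans. apply Rabs_triang. rewrite Rabs_Ropp, Rabs_mult, (Rabs_right eps) by lra.
      assert (Rabs (a1 ^ 2 + a2 ^ 2) * eps <= 2 * B ^ 2 * eps).
      { apply Rmult_le_compat_r. lra. rewrite Rabs_right. lra.
        pose proof (pow2_ge_0 a1). pose proof (pow2_ge_0 a2). lra. }
      lra. }
    eapply Rle_trans. apply Rabs_triang.
    assert (2 * (da * (B + a)) * R0 <= R0 * da * (1 + 2 * (B + a))).
    { assert (0 <= R0 * da) by (apply Rmult_le_pos; lra). nra. }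
    subst E; lra.
Qed.

Lemma DYN (d1 d2 : R -> R -> R) (dl x1 x2 v1 v2 : R -> R) (eps X1 X2 M0 eta rho C theta R0 : R) :
  0 < eps <= 1 ->
  (forall u, continuity_pt dl u) ->
  (forall u, eps <= Rabs u -> dl u = 0) ->
  (forall U, derivable_pt_lim x1 U (v1 U)) -> (forall U, derivable_pt_lim x2 U (v2 U)) ->
  (forall U, derivable_pt_lim v1 U (/2 * d1 (x1 U) (x2 U) * dl U)) ->
  (forall U, derivable_pt_lim v2 U (/2 * d2 (x1 U) (x2 U) * dl U)) ->
  x1 (-1) = X1 -> x2 (-1) = X2 -> v1 (-1) = 0 -> v2 (-1) = 0 ->
  RInt (fun u => Rabs (dl u)) (-eps) eps <= C ->
  Rabs (RInt dl (-eps) eps - 1) <= theta ->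
  Rabs (d1 X1 X2) <= M0 -> Rabs (d2 X1 X2) <= M0 ->
  0 < eta <= 1 -> 0 < rho ->
  (forall Y1 Y2, Rabs (Y1 - X1) + Rabs (Y2 - X2) < rho ->
     Rabs (d1 Y1 Y2 - d1 X1 X2) < eta /\ Rabs (d2 Y1 Y2 - d2 X1 X2) < eta) ->
  4 * (/2 * (M0 + 1) * C) * eps < rho / 2 ->
  forall U, Rabs U <= R0 ->
  let B := /2 * (M0 + 1) * C in let a := /2 * M0 in let da := /2 * eta * C + a * theta in
  let E := (3 * B + a + 6 * B^2 + 2 * a^2) * eps + R0 * da * (1 + 2 * (B + a)) in
    Rabs (x1 U - (X1 + /2 * d1 X1 X2 * Upos U)) <= E /\
    Rabs (x2 U - (X2 + /2 * d2 X1 X2 * Upos U)) <= E /\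
    Rabs (RInt (fun s => v1 s ^ 2 + v2 s ^ 2) (-eps) U - /4 * (d1 X1 X2 ^ 2 + d2 X1 X2 ^ 2) * Upos U) <= E.
Proof.
  intros Heps Hdlc Hdlz Hx1 Hx2 Hv1 Hv2 Hi1 Hi2 Hi3 Hi4 HC Hth HM1 HM2 Heta Hrho Huc Hsmall U HU B a da E.
  assert (HC0 : 0 <= C).
  { destruct (Hfacts dl eps ltac:(lra) Hdlc) as [_ [_ Hb]]. pose proof (Hb eps ltac:(lra)). lra. }
  assert (HM0 : 0 <= M0) by (pose proof (Rabs_pos (d1 X1 X2)); lra).
  assert (Hth0 : 0 <= theta) by (pose proof (Rabs_pos (RInt dl (-eps) eps - 1)); lra).
  assert (HR0 : 0 <= R0) by (pose proof (Rabs_pos U); lra).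
  assert (HB : 0 <= B) by (unfold B; apply Rmult_le_pos; [apply Rmult_le_pos|]; lra).
  assert (Ha : 0 <= a) by (unfold a; lra).
  assert (Hda : 0 <= da) by (unfold da; assert (0 <= eta * C) by (apply Rmult_le_pos; lra);
     assert (0 <= a * theta) by (apply Rmult_le_pos; lra); lra).
  assert (Hdl0 : forall c, c <= -eps -> dl c = 0).
  { intros c Hc. apply Hdlz. rewrite Rabs_left by lra. lra. }
  assert (Hdlr : forall c, eps <= c -> dl c = 0).
  { intros c Hc. apply Hdlz. rewrite Rabs_right by lra. lra. }
  assert (Lv1 : forall r, r <= -eps -> v1 r = 0).
  { intros r Hr. rewrite <- Hi3. apply (left_const v1 eps); try lra. intros c Hc.
    eapply dl_eq. apply Hv1. rewrite Hdl0 by auto. ring. }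
  assert (Lv2 : forall r, r <= -eps -> v2 r = 0).
  { intros r Hr. rewrite <- Hi4. apply (left_const v2 eps); try lra. intros c Hc.
    eapply dl_eq. apply Hv2. rewrite Hdl0 by auto. ring. }
  assert (Lx1 : forall r, r <= -eps -> x1 r = X1).
  { intros r Hr. rewrite <- Hi1. apply (left_const x1 eps); try lra. intros c Hc.
    eapply dl_eq. apply Hx1. auto. }
  assert (Lx2 : forall r, r <= -eps -> x2 r = X2).
  { intros r Hr. rewrite <- Hi2. apply (left_const x2 eps); try lra. intros c Hc.
    eapply dl_eq. apply Hx2. auto. }
  set (phi := fun t => Rabs (x1 t - X1) + Rabs (x2 t - X2)).
  assert (Hphic : forall t, continuity_pt phi t).
  { intros t. unfold phi. apply cont_plus; apply cont_abs.
    - apply (dpl_cont _ _ (v1 t - 0)). apply dl_minus. apply Hx1. apply dl_const.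
    - apply (dpl_cont _ _ (v2 t - 0)). apply dl_minus. apply Hx2. apply dl_const. }
  assert (Kb : forall t, -eps <= t <= eps -> (forall c, -eps <= c <= t -> phi c < rho) ->
     (forall c, -eps <= c <= t -> Rabs (v1 c) <= B /\ Rabs (v2 c) <= B)).
  { intros t Ht Hpre c Hc.
    assert (Hk : forall c, -eps <= c <= t -> Rabs (d1 (x1 c) (x2 c)) <= M0 + 1 /\ Rabs (d2 (x1 c) (x2 c)) <= M0 + 1).
    { intros c' Hc'. destruct (Huc (x1 c') (x2 c') (Hpre c' Hc')).
      pose proof (Rabs_tri (d1 (x1 c') (x2 c')) (d1 X1 X2) 0).
      pose proof (Rabs_tri (d2 (x1 c') (x2 c')) (d2 X1 X2) 0). rewrite !Rminus_0_r in *. lra. }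
    split.
    - apply (vbound dl v1 (fun c => d1 (x1 c) (x2 c)) eps (M0 + 1) C t); try lra; auto.
      apply Lv1; lra. intros; apply Hk; auto.
    - apply (vbound dl v2 (fun c => d2 (x1 c) (x2 c)) eps (M0 + 1) C t); try lra; auto.
      apply Lv2; lra. intros; apply Hk; auto. }
  assert (Boot : forall t, -eps <= t <= eps -> phi t < rho / 2).
  { apply CI. lra. auto. unfold phi. rewrite Lx1, Lx2 by lra. unfold Rminus; rewrite !Rplus_opp_r, Rabs_R0. lra.
    intros t Ht Hpre.
    assert (Hv : forall c, -eps <= c <= t -> Rabs (v1 c) <= B /\ Rabs (v2 c) <= B).
    { apply (Kb t Ht). intros c Hc. pose proof (Hpre c Hc). lra. }
    pose proof (xbound x1 v1 (-eps) t B ltac:(lra) Hx1 ltac:(intros; apply Hv; auto)).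
    pose proof (xbound x2 v2 (-eps) t B ltac:(lra) Hx2 ltac:(intros; apply Hv; auto)).
    rewrite (Lx1 (-eps)) in H by lra. rewrite (Lx2 (-eps)) in H0 by lra. unfold phi.
    assert (B * (t - - eps) <= B * (2 * eps)) by (apply Rmult_le_compat_l; lra).
    assert (Hs' : 4 * B * eps < rho / 2) by exact Hsmall. lra. }
  assert (Hv : forall c, -eps <= c <= eps -> Rabs (v1 c) <= B /\ Rabs (v2 c) <= B).
  { apply (Kb eps ltac:(lra)). intros c Hc. pose proof (Boot c Hc). lra. }
  assert (Hxb : forall r, -eps <= r <= eps -> Rabs (x1 r - X1) <= 2 * B * eps /\ Rabs (x2 r - X2) <= 2 * B * eps).
  { intros r Hr.
    pose proof (xbound x1 v1 (-eps) r B ltac:(lra) Hx1 ltac:(intros; apply Hv; lra)).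
    pose proof (xbound x2 v2 (-eps) r B ltac:(lra) Hx2 ltac:(intros; apply Hv; lra)).
    rewrite (Lx1 (-eps)) in H by lra. rewrite (Lx2 (-eps)) in H0 by lra.
    assert (B * (r - - eps) <= B * (2 * eps)) by (apply Rmult_le_compat_l; lra). lra. }
  assert (Hd : forall c, -eps <= c <= eps -> Rabs (d1 (x1 c) (x2 c) - d1 X1 X2) <= eta /\ Rabs (d2 (x1 c) (x2 c) - d2 X1 X2) <= eta).
  { intros c Hc. pose proof (Boot c Hc). unfold phi in H. destruct (Huc (x1 c) (x2 c)). lra. lra. }
  assert (Ha1 : Rabs (v1 eps - /2 * d1 X1 X2) <= da).
  { eapply Rle_trans. apply (F4 dl v1 (fun c => d1 (x1 c) (x2 c)) eps C theta (d1 X1 X2) eta); try lra; auto.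
    apply Lv1; lra. intros; apply Hd; auto.
    unfold da. rewrite Rabs_mult, (Rabs_right (/2)) by lra. 
    assert (/2 * Rabs (d1 X1 X2) * theta <= a * theta) by (apply Rmult_le_compat_r; unfold a; lra). lra. }
  assert (Ha2 : Rabs (v2 eps - /2 * d2 X1 X2) <= da).
  { eapply Rle_trans. apply (F4 dl v2 (fun c => d2 (x1 c) (x2 c)) eps C theta (d2 X1 X2) eta); try lra; auto.
    apply Lv2; lra. intros; apply Hd; auto.
    unfold da. rewrite Rabs_mult, (Rabs_right (/2)) by lra. 
    assert (/2 * Rabs (d2 X1 X2) * theta <= a * theta) by (apply Rmult_le_compat_r; unfold a; lra). lra. }
  assert (Rv1 : forall r, eps <= r -> v1 r = v1 eps).
  { apply right_const. intros c Hc. eapply dl_eq. apply Hv1. rewrite Hdlr by auto. ring. }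
  assert (Rv2 : forall r, eps <= r -> v2 r = v2 eps).
  { apply right_const. intros c Hc. eapply dl_eq. apply Hv2. rewrite Hdlr by auto. ring. }
  assert (Rx1 : forall r, eps <= r -> x1 r = x1 eps + v1 eps * (r - eps)).
  { intros r Hr. assert (x1 r - v1 eps * r = x1 eps - v1 eps * eps); [|lra].
    apply (right_const (fun s => x1 s - v1 eps * s)); auto. intros c Hc.
    apply (dl_eq _ _ (v1 c - v1 eps * 1)). apply dl_minus. apply Hx1. apply dl_scal, dl_id.
    rewrite Rv1 by auto. ring. }
  assert (Rx2 : forall r, eps <= r -> x2 r = x2 eps + v2 eps * (r - eps)).
  { intros r Hr. assert (x2 r - v2 eps * r = x2 eps - v2 eps * eps); [|lra].
    apply (right_const (fun s => x2 s - v2 eps * s)); auto. intros c Hc.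
    apply (dl_eq _ _ (v2 c - v2 eps * 1)). apply dl_minus. apply Hx2. apply dl_scal, dl_id.
    rewrite Rv2 by auto. ring. }
  assert (HA1 : Rabs (/2 * d1 X1 X2) <= a) by (unfold a; rewrite Rabs_mult, Rabs_right by lra; lra).
  assert (HA2 : Rabs (/2 * d2 X1 X2) <= a) by (unfold a; rewrite Rabs_mult, Rabs_right by lra; lra).
  destruct (Hv eps ltac:(lra)) as [Hb1 Hb2].
  split; [|split].
  - apply (xerr x1 X1 (d1 X1 X2) eps B a da R0 U (v1 eps) E); auto; try lra.
    intros; apply Hxb; auto.
  - apply (xerr x2 X2 (d2 X1 X2) eps B a da R0 U (v2 eps) E); auto; try lra.
    intros; apply Hxb; auto.
  - assert (Hwc : forall s, continuity_pt (fun s => v1 s ^ 2 + v2 s ^ 2) s).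
    { intros s. apply cont_plus; apply cont_sq; eapply dpl_cont; [apply Hv1|apply Hv2]. }
    apply (Gerr (fun U => RInt (fun s => v1 s ^ 2 + v2 s ^ 2) (-eps) U) (fun s => v1 s ^ 2 + v2 s ^ 2)
       eps B a da R0 U (v1 eps) (v2 eps) (d1 X1 X2) (d2 X1 X2) E); auto; try lra.
    + intros s. exact (FTC_RInt _ Hwc (-eps) s).
    + apply RInt_refl; auto.
    + intros s Hs. rewrite Lv1, Lv2 by auto. ring.
    + intros s Hs. destruct (Hv s Hs). pose proof (sq_le _ _ H). pose proof (sq_le _ _ H0).
      rewrite Rabs_right. lra. pose proof (pow2_ge_0 (v1 s)). pose proof (pow2_ge_0 (v2 s)). lra.
    + intros s Hs. rewrite Rv1, Rv2 by auto. auto.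
Qed.

Lemma INNER (d1 d2 : R -> R -> R) (dl x1 x2 v1 v2 : R -> R) eps :
  0 < eps <= 1 -> cont2 d1 -> cont2 d2 ->
  (forall u, continuity_pt dl u) ->
  (forall u, eps <= Rabs u -> dl u = 0) ->
  (forall U, derivable_pt_lim x1 U (v1 U)) -> (forall U, derivable_pt_lim x2 U (v2 U)) ->
  (forall U, derivable_pt_lim v1 U (/2 * d1 (x1 U) (x2 U) * dl U)) ->
  (forall U, derivable_pt_lim v2 U (/2 * d2 (x1 U) (x2 U) * dl U)) ->
  v1 (-1) = 0 -> v2 (-1) = 0 ->
  forall s, RInt (fun r => (d1 (x1 r) (x2 r) * v1 r + d2 (x1 r) (x2 r) * v2 r) * dl r) (-eps) s
            = v1 s ^ 2 + v2 s ^ 2.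
Proof.
  intros Heps Hc1 Hc2 Hdlc Hdlz Hx1 Hx2 Hv1 Hv2 Hi3 Hi4 s.
  assert (Hdl0 : forall c, c <= -eps -> dl c = 0).
  { intros c Hc. apply Hdlz. rewrite Rabs_left by lra. lra. }
  assert (Lv1 : v1 (-eps) = 0).
  { rewrite <- Hi3. apply (left_const v1 eps); try lra. intros c Hc.
    eapply dl_eq. apply Hv1. rewrite Hdl0 by auto. ring. }
  assert (Lv2 : v2 (-eps) = 0).
  { rewrite <- Hi4. apply (left_const v2 eps); try lra. intros c Hc.
    eapply dl_eq. apply Hv2. rewrite Hdl0 by auto. ring. }
  assert (Hxc1 : forall t, continuity_pt x1 t) by (intros; eapply dpl_cont; apply Hx1).
  assert (Hxc2 : forall t, continuity_pt x2 t) by (intros; eapply dpl_cont; apply Hx2).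
  assert (Hk : forall r, continuity_pt (fun r => (d1 (x1 r) (x2 r) * v1 r + d2 (x1 r) (x2 r) * v2 r) * dl r) r).
  { intros r. apply cont_mult; auto. apply cont_plus; apply cont_mult.
    apply cont_comp2; auto. eapply dpl_cont; apply Hv1.
    apply cont_comp2; auto. eapply dpl_cont; apply Hv2. }
  set (k := fun r => (d1 (x1 r) (x2 r) * v1 r + d2 (x1 r) (x2 r) * v2 r) * dl r) in *.
  assert (RInt k (-eps) s - (v1 s ^ 2 + v2 s ^ 2) = RInt k (-eps) (-eps) - (v1 (-eps) ^ 2 + v2 (-eps) ^ 2)).
  { apply (CONST (fun s => RInt k (-eps) s - (v1 s ^ 2 + v2 s ^ 2))). intros c _.
    apply (dl_eq _ _ (k c - (2 * v1 c * (/2 * d1 (x1 c) (x2 c) * dl c) + 2 * v2 c * (/2 * d2 (x1 c) (x2 c) * dl c)))).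
    apply dl_minus. apply FTC_RInt; auto. apply dl_plus; apply dl_sq; auto.
    unfold k. field. }
  rewrite RInt_refl, Lv1, Lv2 in H by auto. lra.
Qed.

Theorem proposition7p3
  (f df1 df2 : R -> R -> R) (delta : R -> R -> R)
  (x1 x2 xd1 xd2 : R -> R -> R -> R -> R) :
  smooth2 f -> pd2 f true df1 -> pd2 f false df2 ->
  strict_delta_net delta ->
  (forall eps, 0 < eps <= 1 -> smooth3 (x1 eps) /\ smooth3 (x2 eps)) ->
  (forall eps, 0 < eps <= 1 -> forall X1 X2 U,
      derivable_pt_lim (fun u => x1 eps X1 X2 u) U (xd1 eps X1 X2 U) /\
      derivable_pt_lim (fun u => x2 eps X1 X2 u) U (xd2 eps X1 X2 U)) ->
  (forall K : R * R -> Prop, is_compact dist2 K ->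
     exists epsK, 0 < epsK /\ forall eps, 0 < eps <= 1 -> eps <= epsK ->
       forall X1 X2, K (X1, X2) ->
         (forall U,
            derivable_pt_lim (fun u => xd1 eps X1 X2 u) U
              (/ 2 * df1 (x1 eps X1 X2 U) (x2 eps X1 X2 U) * delta eps U) /\
            derivable_pt_lim (fun u => xd2 eps X1 X2 u) U
              (/ 2 * df2 (x1 eps X1 X2 U) (x2 eps X1 X2 U) * delta eps U)) /\
         x1 eps X1 X2 (-1) = X1 /\ x2 eps X1 X2 (-1) = X2 /\
         xd1 eps X1 X2 (-1) = 0 /\ xd2 eps X1 X2 (-1) = 0) ->
  forall K : R * R * R * R -> Prop, is_compact dist4 K ->
    forall eta, 0 < eta -> exists e0, 0 < e0 /\
      forall eps, 0 < eps <= 1 -> eps <= e0 ->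
        forall p, K p ->
          dist4 (s_eps df1 df2 delta x1 x2 xd1 xd2 eps p) (s_lim df1 df2 p) < eta.
Proof.
  intros Hf Hpd1 Hpd2 Hnet Hsm Hder Hivp K HK eta Heta.
  assert (Hc1 : cont2 df1) by (exact (cont2_pd f df1 true Hf Hpd1)).
  assert (Hc2 : cont2 df2) by (exact (cont2_pd f df2 false Hf Hpd2)).
  destruct Hnet as [Hsm1 [Hsupp [Hint [C [e1 [HC [He1 HCb]]]]]]].
  set (K2 := fun Y : R * R => exists U V, K (U, fst Y, snd Y, V)).
  assert (HK2 : is_compact dist2 K2) by (apply K2_compact; auto).
  destruct (Hivp K2 HK2) as [epsK [HepsK Hivp2]].
  destruct (U_bound K HK) as [R0 HR0].
  destruct (g_bound K2 df1 HK2 Hc1) as [M1 [HM1 HM1b]].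
  destruct (g_bound K2 df2 HK2 Hc2) as [M2 [HM2 HM2b]].
  set (M0 := Rmax M1 M2).
  assert (HM0 : 0 <= M0) by (unfold M0; pose proof (Rmax_l M1 M2); lra).
  set (R1 := Rmax R0 0).
  assert (HR0p : 0 <= R1) by apply Rmax_r.
  set (B := /2 * (M0 + 1) * C). set (a := /2 * M0).
  assert (HB : 0 <= B) by (unfold B; apply Rmult_le_pos; [apply Rmult_le_pos|]; lra).
  assert (Ha : 0 <= a) by (unfold a; lra).
  set (Q := 3 * B + a + 6 * B^2 + 2 * a^2).
  set (P := R1 * (1 + 2 * (B + a))).
  assert (HQ : 0 <= Q) by (unfold Q; pose proof (pow2_ge_0 B); pose proof (pow2_ge_0 a); lra).
  assert (HP : 0 <= P) by (unfold P; apply Rmult_le_pos; lra).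
  assert (HPC : 0 <= P * C) by (apply Rmult_le_pos; lra).
  assert (HPa : 0 <= P * a) by (apply Rmult_le_pos; lra).
  set (et := Rmin 1 (eta / (3 * (P * C + 1)))).
  assert (Het : 0 < et <= 1).
  { unfold et. split. apply Rmin_pos. lra. apply Rdiv_lt_0_compat; lra. apply Rmin_l. }
  assert (Het2 : et * (P * C + 1) <= eta / 3).
  { pose proof (Rmin_r 1 (eta / (3 * (P * C + 1)))). fold et in H.
    apply (Rmult_le_compat_r (P * C + 1)) in H; [|lra].
    replace (eta / (3 * (P * C + 1)) * (P * C + 1)) with (eta / 3) in H by (field; lra). auto. }
  set (th := eta / (3 * (P * a + 1))).
  assert (Hth : 0 < th) by (unfold th; apply Rdiv_lt_0_compat; lra).
  assert (Hth2 : th * (P * a + 1) = eta / 3) by (unfold th; field; lra).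
  destruct (compact_uc K2 df1 HK2 Hc1 et ltac:(lra)) as [r1 [Hr1 Huc1]].
  destruct (compact_uc K2 df2 HK2 Hc2 et ltac:(lra)) as [r2 [Hr2 Huc2]].
  set (rho := Rmin r1 r2).
  assert (Hrho : 0 < rho) by (apply Rmin_pos; auto).
  destruct (Hint th Hth) as [e2 [He2 Hint2]].
  set (e0 := Rmin (Rmin (Rmin epsK e1) (Rmin e2 1))
                  (Rmin (eta / (3 * (Q + 1))) (rho / (8 * (B + 1))))).
  exists e0. split.
  { unfold e0. repeat apply Rmin_pos; try lra; apply Rdiv_lt_0_compat; lra. }
  intros eps Heps Heps0 p Hp.
  assert (Le : eps <= epsK /\ eps <= e1 /\ eps <= e2 /\ eps <= eta / (3 * (Q + 1)) /\ eps <= rho / (8 * (B + 1))).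
  { unfold e0 in Heps0.
    pose proof (Rmin_l (Rmin (Rmin epsK e1) (Rmin e2 1)) (Rmin (eta / (3 * (Q + 1))) (rho / (8 * (B + 1))))).
    pose proof (Rmin_r (Rmin (Rmin epsK e1) (Rmin e2 1)) (Rmin (eta / (3 * (Q + 1))) (rho / (8 * (B + 1))))).
    pose proof (Rmin_l (Rmin epsK e1) (Rmin e2 1)). pose proof (Rmin_r (Rmin epsK e1) (Rmin e2 1)).
    pose proof (Rmin_l epsK e1). pose proof (Rmin_r epsK e1). pose proof (Rmin_l e2 1).
    pose proof (Rmin_l (eta / (3 * (Q + 1))) (rho / (8 * (B + 1)))).
    pose proof (Rmin_r (eta / (3 * (Q + 1))) (rho / (8 * (B + 1)))). lra. }
  destruct Le as [L1 [L2 [L3 [L4 L5]]]].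
  destruct p as [[[U X1] X2] V].
  assert (HX : K2 (X1, X2)) by (exists U, V; exact Hp).
  destruct (Hivp2 eps Heps L1 X1 X2 HX) as [Hv [Hi1 [Hi2 [Hi3 Hi4]]]].
  assert (Hdlc : forall u, continuity_pt (delta eps) u) by (apply smooth1_cont; auto).
  assert (Hdlz : forall u, eps <= Rabs u -> delta eps u = 0).
  { apply zero_edge; auto; try lra. }
  assert (Hx1 : forall U, derivable_pt_lim (x1 eps X1 X2) U (xd1 eps X1 X2 U)) by (intros; apply Hder; auto).
  assert (Hx2 : forall U, derivable_pt_lim (x2 eps X1 X2) U (xd2 eps X1 X2 U)) by (intros; apply Hder; auto).
  assert (Hv1 : forall U, derivable_pt_lim (xd1 eps X1 X2) U (/ 2 * df1 (x1 eps X1 X2 U) (x2 eps X1 X2 U) * delta eps U)) by (intros; apply Hv).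
  assert (Hv2 : forall U, derivable_pt_lim (xd2 eps X1 X2) U (/ 2 * df2 (x1 eps X1 X2 U) (x2 eps X1 X2 U) * delta eps U)) by (intros; apply Hv).
  assert (HCi : RInt (fun u => Rabs (delta eps u)) (-eps) eps <= C) by (apply HCb; auto).
  assert (Hthi : Rabs (RInt (delta eps) (-eps) eps - 1) <= th) by (left; apply Hint2; auto).
  assert (HMa : Rabs (df1 X1 X2) <= M0) by (pose proof (HM1b X1 X2 HX); pose proof (Rmax_l M1 M2); unfold M0; lra).
  assert (HMb : Rabs (df2 X1 X2) <= M0) by (pose proof (HM2b X1 X2 HX); pose proof (Rmax_r M1 M2); unfold M0; lra).
  assert (Huc : forall Y1 Y2, Rabs (Y1 - X1) + Rabs (Y2 - X2) < rho ->
     Rabs (df1 Y1 Y2 - df1 X1 X2) < et /\ Rabs (df2 Y1 Y2 - df2 X1 X2) < et).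
  { intros Y1 Y2 HY.
    assert (Hd : dist2 (X1, X2) (Y1, Y2) <= Rabs (Y1 - X1) + Rabs (Y2 - X2)).
    { unfold dist2; simpl. rewrite (Rabs_minus_sym X1), (Rabs_minus_sym X2).
      pose proof (Rabs_pos (Y1 - X1)). pose proof (Rabs_pos (Y2 - X2)). apply Rmax_lub; lra. }
    pose proof (Rmin_l r1 r2). pose proof (Rmin_r r1 r2). fold rho in H, H0.
    split.
    - exact (Huc1 (X1, X2) (Y1, Y2) HX ltac:(lra)).
    - exact (Huc2 (X1, X2) (Y1, Y2) HX ltac:(lra)). }
  assert (Hsmall : 4 * (/2 * (M0 + 1) * C) * eps < rho / 2).
  { assert (eps * (8 * (B + 1)) <= rho).
    { apply (Rmult_le_compat_r (8 * (B + 1))) in L5; [|lra].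
      replace (rho / (8 * (B + 1)) * (8 * (B + 1))) with rho in L5 by (field; lra). auto. }
    change (4 * B * eps < rho / 2). lra. }
  assert (HU : Rabs U <= R1) by (pose proof (HR0 U X1 X2 V Hp); pose proof (Rmax_l R0 0); unfold R1; lra).
  pose proof (DYN df1 df2 (delta eps) (x1 eps X1 X2) (x2 eps X1 X2) (xd1 eps X1 X2) (xd2 eps X1 X2)
     eps X1 X2 M0 et rho C th R1 Heps Hdlc Hdlz Hx1 Hx2 Hv1 Hv2 Hi1 Hi2 Hi3 Hi4 HCi Hthi HMa HMb
     Het Hrho Huc Hsmall U HU) as D.
  cbv zeta in D. destruct D as [D1 [D2 D3]].
  assert (Ebound : Q * eps + R1 * (/2 * et * C + a * th) * (1 + 2 * (B + a)) < eta).
  { assert (E1 : Q * eps < eta / 3).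
    { apply (Rmult_le_compat_r (3 * (Q + 1))) in L4; [|lra].
      replace (eta / (3 * (Q + 1)) * (3 * (Q + 1))) with eta in L4 by (field; lra). nra. }
    replace (R1 * (/2 * et * C + a * th) * (1 + 2 * (B + a))) with (/2 * et * (P * C) + th * (P * a))
      by (unfold P; ring).
    assert (et * (P * C) <= et * (P * C + 1)) by (apply Rmult_le_compat_l; lra).
    assert (th * (P * a) <= th * (P * a + 1)) by (apply Rmult_le_compat_l; lra).
    lra. }
  assert (Hin : (fun s => RInt (fun r =>
          (df1 (x1 eps X1 X2 r) (x2 eps X1 X2 r) * xd1 eps X1 X2 r
         + df2 (x1 eps X1 X2 r) (x2 eps X1 X2 r) * xd2 eps X1 X2 r) * delta eps r) (- eps) s)
        = (fun s => xd1 eps X1 X2 s ^ 2 + xd2 eps X1 X2 s ^ 2)).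
  { apply functional_extensionality. intros s.
    exact (INNER df1 df2 (delta eps) (x1 eps X1 X2) (x2 eps X1 X2) (xd1 eps X1 X2) (xd2 eps X1 X2) eps
      Heps Hc1 Hc2 Hdlc Hdlz Hx1 Hx2 Hv1 Hv2 Hi3 Hi4 s). }
  unfold s_eps, s_lim, w_eps. rewrite Hin.
  apply dist4_lt.
  - unfold Rminus; rewrite Rplus_opp_r, Rabs_R0; lra.
  - eapply Rle_lt_trans; [exact D1|exact Ebound].
  - eapply Rle_lt_trans; [exact D2|exact Ebound].
  - replace (V + RInt (fun s => xd1 eps X1 X2 s ^ 2 + xd2 eps X1 X2 s ^ 2) (- eps) U -
      (V + / 4 * (df1 X1 X2 ^ 2 + df2 X1 X2 ^ 2) * Upos U))
      with (RInt (fun s => xd1 eps X1 X2 s ^ 2 + xd2 eps X1 X2 s ^ 2) (- eps) U -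
      / 4 * (df1 X1 X2 ^ 2 + df2 X1 X2 ^ 2) * Upos U) by ring.
    eapply Rle_lt_trans; [exact D3|exact Ebound].
Qed.
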